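(* Let $\alpha\in(0,1)$ be irrational with regular continued fraction $\alpha=\cfrac{1}{a_1+\cfrac{1}{a_2+\cdots}}$ (partial quotients $a_j\in\mathbb{Z}^+$). Then the sequence $(a_j)_{j\ge1}$ is bounded if and only if there is $\delta>0$ with $|\alpha_{k,1}|\ge\delta$ for all $k\ge1$, where $\alpha_{k,1}$ comes from the Minkowski chain of $\alpha$ (case $n=1$).
   Context: Minkowski chain (case $n=1$, $\ell=2$): for $r=(r_1,r_2)\in\mathbb{Z}^2$ put $\xi(r)=r_1\alpha+r_2$. For $m\in\mathbb{Z}^+$, $A_m$ is the nonsingular integral $2\times2$ matrix with rows $w_1,w_2$ chosen successively: $w_1$ is the nonzero $w\in\mathbb{Z}^2$ with $\max(|w_1|,|w_2|)\le m$ minimizing $|\xi(w)|$, and $w_2$ is the $w$ with $\max$-norm $\le m$, linearly independent of $w_1$, minimizing $|\xi(w)|$; each normalized so that its first nonzero entry is positive. The Minkowski chain $B_1,B_2,\dots$ is the sequence of distinct matrices among $A_1,A_2,\dots$ in order of appearance. For $B_k$ let $(\beta_1,\beta_2)^\top=B_k(\alpha,1)^\top$ and $\alpha_{k,1}=\beta_1/\beta_2$. *)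

(* Defs.v *)
From Stdlib Require Import Reals ZArith Arith ClassicalEpsilon.
Open Scope R_scope.

Definition irrational (a : R) : Prop :=
  forall p q : Z, q <> 0%Z -> a <> IZR p / IZR q.

(* Regular continued fraction of a in (0,1): x_0 = a, x_{j} = 1/x_{j-1} - a_j,
   a_j = floor (1/x_{j-1}) for j >= 1.  (Int_part = floor.) *)
Fixpoint cf_rem (a : R) (j : nat) : R :=
  match j with
  | O => a
  | S j' => / cf_rem a j' - IZR (Int_part (/ cf_rem a j'))
  end.

(* partial quotient a_j, meaningful for j >= 1 *)
Definition cf_pq (a : R) (j : nat) : Z := Int_part (/ cf_rem a (pred j)).

Definition vec := (Z * Z)%type.
Definition xi (a : R) (r : vec) : R := IZR (fst r) * a + IZR (snd r).

Definition inbox (m : nat) (r : vec) : Prop :=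
  (Z.abs (fst r) <= Z.of_nat m)%Z /\ (Z.abs (snd r) <= Z.of_nat m)%Z.

Definition normalized (r : vec) : Prop :=
  (0 < fst r)%Z \/ (fst r = 0%Z /\ (0 < snd r)%Z).

Definition det2 (u v : vec) : Z := (fst u * snd v - snd u * fst v)%Z.

(* a 2x2 integral matrix, given by its rows (w1, w2) *)
Definition mat := (vec * vec)%type.

Definition IsA (a : R) (m : nat) (A : mat) : Prop :=
  let w1 := fst A in let w2 := snd A in
  (normalized w1 /\ inbox m w1 /\
   forall w : vec, w <> (0%Z, 0%Z) -> inbox m w -> Rabs (xi a w1) <= Rabs (xi a w))
  /\
  (normalized w2 /\ inbox m w2 /\ det2 w1 w2 <> 0%Z /\
   forall w : vec, det2 w1 w <> 0%Z -> inbox m w -> Rabs (xi a w2) <= Rabs (xi a w)).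

(* A_m as a function (the defining property determines it uniquely for
   irrational alpha and m >= 1) *)
Definition Amat (a : R) (m : nat) : mat :=
  epsilon (inhabits ((0%Z, 0%Z), (0%Z, 0%Z))) (IsA a m).

Definition Appeared (a : R) (j : nat) : Prop :=
  exists i, (1 <= i < j)%nat /\ Amat a i = Amat a j.

(* ChainIdx a k m : the k-th matrix B_k of the Minkowski chain is A_m,
   with m the index of its first appearance. *)
Inductive ChainIdx (a : R) : nat -> nat -> Prop :=
| ChainIdx1 : ChainIdx a 1 1
| ChainIdxS : forall k m m', ChainIdx a k m -> (m < m')%nat -> ~ Appeared a m' ->
    (forall j, (m < j < m')%nat -> Appeared a j) -> ChainIdx a (S k) m'.

(* alpha_{k,1} = beta_1 / beta_2 where (beta_1, beta_2)^T = B (alpha, 1)^T *)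
Definition alpha_1 (a : R) (B : mat) : R := xi a (fst B) / xi a (snd B).

(* Main.v *)
Require Import Defs.
From Stdlib Require Import Reals ZArith Arith Lra Lia Psatz List Classical ClassicalEpsilon.
Open Scope R_scope.

Lemma Int_part_bounds (r : R) : IZR (Int_part r) <= r /\ r - IZR (Int_part r) < 1.
Proof. destruct (base_Int_part r) as [H1 H2]. split; lra. Qed.

Lemma irr_step (x : R) (n : Z) : irrational x -> irrational (/ x - IZR n).
Proof.
  intros Hx p q Hq Heq.
  assert (Hx0 : x <> 0).
  { intro E. apply (Hx 0%Z 1%Z); [lia|]. rewrite E. unfold Rdiv. simpl. ring. }
  assert (Hi : / x = IZR (p + n * q) / IZR q).
  { rewrite plus_IZR, mult_IZR. apply (Rplus_eq_reg_r (- IZR n)).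
    replace (/ x + - IZR n) with (/ x - IZR n) by ring. rewrite Heq.
    field. apply not_0_IZR; auto. }
  destruct (Z.eq_dec (p + n * q) 0) as [E|E].
  - rewrite E in Hi. unfold Rdiv in Hi. rewrite Rmult_0_l in Hi.
    apply (Rinv_neq_0_compat x Hx0). exact Hi.
  - apply (Hx q (p + n * q)%Z E).
    rewrite <- (Rinv_inv x), Hi. field. split; apply not_0_IZR; auto.
Qed.

Lemma cf_rem_S a i : cf_rem a (S i) = / cf_rem a i - IZR (Int_part (/ cf_rem a i)).
Proof. reflexivity. Qed.

Lemma cf_pq_S a i : cf_pq a (S i) = Int_part (/ cf_rem a i).
Proof. reflexivity. Qed.

Lemma x_prop a : 0 < a -> a < 1 -> irrational a ->
  forall i, irrational (cf_rem a i) /\ 0 < cf_rem a i < 1.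
Proof.
  intros H0 H1 Hi i. induction i as [|i [IHi [IH1 IH2]]].
  - simpl. auto.
  - rewrite cf_rem_S. split; [apply irr_step; auto|].
    destruct (Int_part_bounds (/ cf_rem a i)) as [B1 B2].
    split; [|lra].
    assert (B3 : 0 <= / cf_rem a i - IZR (Int_part (/ cf_rem a i))) by lra.
    destruct (Rle_lt_or_eq_dec _ _ B3) as [L|E]; [lra|].
    exfalso. apply (irr_step _ (Int_part (/ cf_rem a i)) IHi 0%Z 1%Z); [lia|].
    rewrite <- E. unfold Rdiv; simpl; ring.
Qed.

Lemma a_ge1 a : 0 < a -> a < 1 -> irrational a -> forall i, (1 <= cf_pq a (S i))%Z.
Proof.
  intros H0 H1 Hi i. rewrite cf_pq_S.
  destruct (x_prop a H0 H1 Hi i) as [_ [X1 X2]].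
  destruct (Int_part_bounds (/ cf_rem a i)) as [B1 B2].
  assert (1 < / cf_rem a i).
  { rewrite <- Rinv_1. apply Rinv_lt_contravar; lra. }
  assert (0 < IZR (Int_part (/ cf_rem a i))) by lra.
  apply lt_0_IZR in H2. lia.
Qed.

Fixpoint Q (a : R) (i : nat) : Z :=
  match i with
  | O => 0%Z
  | S O => 1%Z
  | S ((S i') as j) => (cf_pq a j * Q a j + Q a i')%Z
  end.
Fixpoint P (a : R) (i : nat) : Z :=
  match i with
  | O => 1%Z
  | S O => 0%Z
  | S ((S i') as j) => (cf_pq a j * P a j + P a i')%Z
  end.
Fixpoint T (a : R) (i : nat) : R :=
  match i with
  | O => 1
  | S i' => T a i' * cf_rem a i'
  end.
Definition D a i := IZR (Q a i) * a - IZR (P a i).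

Lemma Q_SS a i : Q a (S (S i)) = (cf_pq a (S i) * Q a (S i) + Q a i)%Z.
Proof. reflexivity. Qed.
Lemma P_SS a i : P a (S (S i)) = (cf_pq a (S i) * P a (S i) + P a i)%Z.
Proof. reflexivity. Qed.
Lemma T_S a i : T a (S i) = T a i * cf_rem a i.
Proof. reflexivity. Qed.

Section CF.
Context (a : R) (H0 : 0 < a) (H1 : a < 1) (Hirr : irrational a).

Lemma T_pos i : 0 < T a i.
Proof. induction i; simpl; [lra|]. destruct (x_prop a H0 H1 Hirr i) as [_ [X1 X2]]. nra. Qed.

Lemma T_dec i : T a (S i) < T a i.
Proof. rewrite T_S. destruct (x_prop a H0 H1 Hirr i) as [_ [X1 X2]]. pose proof (T_pos i). nra. Qed.

Lemma T_le1 i : T a i <= 1.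
Proof. induction i; simpl; [lra|]. pose proof (T_dec i). rewrite T_S in H. lra. Qed.

Lemma T_lt1 i : T a (S i) < 1.
Proof. pose proof (T_dec i). pose proof (T_le1 i). lra. Qed.

Lemma T_rec i : T a i = IZR (cf_pq a (S i)) * T a (S i) + T a (S (S i)).
Proof.
  rewrite !T_S, cf_rem_S, cf_pq_S.
  destruct (x_prop a H0 H1 Hirr i) as [_ [X1 X2]]. field. lra.
Qed.

Lemma D_rec i : D a (S (S i)) = IZR (cf_pq a (S i)) * D a (S i) + D a i.
Proof. unfold D. rewrite Q_SS, P_SS, !plus_IZR, !mult_IZR. ring. Qed.

Lemma D_sign i : (D a i = T a i /\ D a (S i) = - T a (S i)) \/
                 (D a i = - T a i /\ D a (S i) = T a (S i)).
Proof.
  induction i as [|i [[E1 E2]|[E1 E2]]].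
  - right. unfold D; simpl. split; lra.
  - right. split; [exact E2|]. rewrite D_rec, E1, E2, (T_rec i). lra.
  - left. split; [exact E2|]. rewrite D_rec, E1, E2, (T_rec i). lra.
Qed.

Lemma Q_facts i : (0 <= Q a i)%Z /\ (1 <= Q a (S i))%Z /\ (Q a i <= Q a (S i))%Z
                  /\ (Z.of_nat i <= Q a (S i))%Z /\ (i = O \/ 1 <= Q a i)%Z.
Proof.
  induction i as [|i [A1 [A2 [A3 [A4 A5]]]]].
  - simpl. lia.
  - rewrite Q_SS. pose proof (a_ge1 a H0 H1 Hirr i).
    destruct A5 as [A5|A5]; [subst i; simpl in *; nia|].
    split; [lia|]. split; [nia|]. split; [nia|]. split; [|lia].
    nia.
Qed.

Lemma det_id i : IZR (Q a (S i)) * T a i + IZR (Q a i) * T a (S i) = 1.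
Proof.
  induction i as [|i IH].
  - simpl. lra.
  - rewrite Q_SS, plus_IZR, mult_IZR. rewrite (T_rec i) in IH. lra.
Qed.

Definition eps i := (P a i * Q a (S i) - P a (S i) * Q a i)%Z.

Lemma eps_pm i : eps i = 1%Z \/ eps i = (-1)%Z.
Proof.
  unfold eps. induction i as [|i IH].
  - simpl. lia.
  - rewrite Q_SS, P_SS.
    replace (P a (S i) * (cf_pq a (S i) * Q a (S i) + Q a i) -
             (cf_pq a (S i) * P a (S i) + P a i) * Q a (S i))%Z
      with (- (P a i * Q a (S i) - P a (S i) * Q a i))%Z by ring. lia.
Qed.

Lemma Dabs i : Rabs (D a i) = T a i.
Proof.
  pose proof (T_pos i).
  destruct (D_sign i) as [[E _]|[E _]]; rewrite E; [apply Rabs_pos_eq; lra|].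
  rewrite Rabs_Ropp. apply Rabs_pos_eq; lra.
Qed.

Lemma xi_e i : xi a (Q a i, (- P a i)%Z) = D a i.
Proof. unfold xi, D; simpl. rewrite opp_IZR. ring. Qed.

Lemma P_bounds i : (0 <= P a (S i) <= Q a (S i))%Z.
Proof.
  pose proof (T_lt1 i). pose proof (Dabs (S i)).
  destruct (Q_facts i) as [_ [Q1 _]].
  assert (HQ : 1 <= IZR (Q a (S i))) by (apply IZR_le; lia).
  assert (H3' : Rabs (D a (S i)) < 1) by lra.
  apply Rabs_def2 in H3'. unfold D in H3'. clear H2. rename H3' into H2.
  assert (-1 < IZR (P a (S i))).
  { nra. }
  split.
  - apply lt_IZR in H3. lia.
  - assert (IZR (P a (S i)) < IZR (Q a (S i) + 1)).
    { rewrite plus_IZR. nra. }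
    apply lt_IZR in H4. lia.
Qed.

Lemma inbox_e i m : (1 <= m)%nat -> (Q a i <= Z.of_nat m)%Z -> inbox m (Q a i, (- P a i)%Z).
Proof.
  intros Hm HQ. unfold inbox; simpl.
  destruct i as [|i].
  - simpl. lia.
  - pose proof (P_bounds i). destruct (Q_facts i) as [_ [Q1 _]]. lia.
Qed.


Lemma key_real (u v A B : R) : 0 < A -> 0 <= B ->
  (1 <= u /\ v <= 0 \/ u <= -1 /\ 0 <= v) -> A <= Rabs (u * A - v * B).
Proof.
  intros HA HB [[U V]|[U V]].
  - rewrite Rabs_pos_eq; nra.
  - rewrite Rabs_left1; nra.
Qed.

Lemma Zcase (U V r1 e Qi Qs : Z) : (e = 1 \/ e = -1)%Z -> r1 <> 0%Z -> (0 <= Qi)%Z ->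
  (Z.abs r1 < Qs)%Z -> (r1 * e = U * Qi + V * Qs)%Z ->
  (1 <= U /\ V <= 0 \/ U <= -1 /\ 0 <= V)%Z.
Proof.
  intros He Hr HQi Hlt Heq.
  destruct (Z.lt_trichotomy U 0) as [HU|[HU|HU]];
  destruct (Z.lt_trichotomy V 0) as [HV|[HV|HV]]; try lia;
  destruct He; subst; nia.
Qed.

Lemma best_approx i (r1 r2 : Z) : r1 <> 0%Z -> (Z.abs r1 < Q a (S i))%Z ->
  T a i <= Rabs (IZR r1 * a + IZR r2).
Proof.
  intros Hr Hlt.
  set (U := (- (r1 * P a (S i) + Q a (S i) * r2))%Z).
  set (V := (Q a i * r2 + r1 * P a i)%Z).
  assert (HZ : (r1 * eps i = U * Q a i + V * Q a (S i))%Z) by (unfold U, V, eps; ring).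
  assert (HR : IZR (eps i) * (IZR r1 * a + IZR r2) = IZR U * D a i + IZR V * D a (S i)).
  { unfold U, V, eps, D. rewrite ?opp_IZR, ?minus_IZR, ?plus_IZR, ?mult_IZR. ring. }
  destruct (Q_facts i) as [Q0 _].
  pose proof (Zcase U V r1 (eps i) _ _ (eps_pm i) Hr Q0 Hlt HZ) as HC.
  assert (HC' : 1 <= IZR U /\ IZR V <= 0 \/ IZR U <= -1 /\ 0 <= IZR V).
  { destruct HC as [[c1 c2]|[c1 c2]]; [left|right]; split;
    try (apply IZR_le; lia); apply IZR_le in c1; rewrite opp_IZR in c1; lra. }
  assert (Habs : Rabs (IZR r1 * a + IZR r2) = Rabs (IZR U * D a i + IZR V * D a (S i))).
  { rewrite <- HR, Rabs_mult.
    assert (Rabs (IZR (eps i)) = 1) as ->; [|ring].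
    destruct (eps_pm i) as [E|E]; rewrite E; unfold Rabs; destruct Rcase_abs; lra. }
  rewrite Habs. pose proof (T_pos i). pose proof (T_pos (S i)).
  destruct (D_sign i) as [[E1 E2]|[E1 E2]]; rewrite E1, E2.
  - replace (IZR U * T a i + IZR V * - T a (S i)) with (IZR U * T a i - IZR V * T a (S i)) by ring.
    apply key_real; auto; lra.
  - replace (IZR U * - T a i + IZR V * T a (S i)) with (- (IZR U * T a i - IZR V * T a (S i))) by ring.
    rewrite Rabs_Ropp. apply key_real; auto; lra.
Qed.


Lemma Q_range_aux (m : Z) : (1 <= m)%Z -> forall n, (1 <= n)%nat -> (m < Q a n)%Z ->
  exists k, (1 <= k)%nat /\ (Q a k <= m < Q a (S k))%Z.
Proof.
  intros Hm n. induction n as [|n IH]; intros Hn HQ; [lia|].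
  destruct (Z_lt_le_dec m (Q a n)) as [L|L].
  - destruct n as [|n]; [simpl in L; lia|]. apply IH; auto; lia.
  - exists n. destruct n as [|n]; [simpl in *; lia|]. split; [lia|lia].
Qed.

Lemma Q_range (m : Z) : (1 <= m)%Z -> exists k, (1 <= k)%nat /\ (Q a k <= m < Q a (S k))%Z.
Proof.
  intros Hm. apply (Q_range_aux m Hm (S (S (Z.to_nat m)))); [lia|].
  destruct (Q_facts (S (Z.to_nat m))) as [_ [_ [_ [H _]]]]. lia.
Qed.

End CF.

Lemma list_min {A : Type} (f : A -> R) (Pr : A -> Prop) (L : list A) :
  (exists x, In x L /\ Pr x) ->
  exists x, In x L /\ Pr x /\ forall y, In y L -> Pr y -> f x <= f y.
Proof.
  induction L as [|b L IH]; intros [x [Hx Px]]; [destruct Hx|].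
  destruct (classic (exists x, In x L /\ Pr x)) as [Ex|NEx].
  - destruct (IH Ex) as [z [Hz [Pz Hmin]]].
    destruct (classic (Pr b /\ f b <= f z)) as [[Pb Hb]|Nb].
    + exists b. split; [left; auto|]. split; auto.
      intros y [<-|Hy] Py; [lra|]. specialize (Hmin y Hy Py). lra.
    + exists z. split; [right; auto|]. split; auto.
      intros y [E|Hy] Py; [subst y|auto]. destruct (Rle_dec (f z) (f b)); auto.
      exfalso. apply Nb. split; auto. lra.
  - destruct Hx as [E|Hx]; [subst x|exfalso; apply NEx; eauto].
    exists b. split; [left; auto|]. split; auto.
    intros y [<-|Hy] Py; [lra|]. exfalso; apply NEx; eauto.
Qed.

Definition rng (m : nat) : list Z :=
  map (fun n => (Z.of_nat n - Z.of_nat m)%Z) (seq 0 (2 * m + 1)).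

Lemma in_rng m z : (Z.abs z <= Z.of_nat m)%Z -> In z (rng m).
Proof.
  intros H. unfold rng. apply in_map_iff. exists (Z.to_nat (z + Z.of_nat m)).
  split; [lia|]. apply in_seq. lia.
Qed.

Definition boxl m := list_prod (rng m) (rng m).

Lemma in_boxl m w : inbox m w -> In w (boxl m).
Proof.
  destruct w as [x y]. intros [Hx Hy]. apply in_prod_iff. split; apply in_rng; auto.
Qed.

Lemma box_min m (Pr : vec -> Prop) (f : vec -> R) w0 : inbox m w0 -> Pr w0 ->
  exists w, inbox m w /\ Pr w /\ forall y, inbox m y -> Pr y -> f w <= f y.
Proof.
  intros Hb Hp.
  destruct (list_min f (fun w => inbox m w /\ Pr w) (boxl m)) as [w [_ [[Hw1 Hw2] Hmin]]].
  - exists w0. split; [apply in_boxl|]; auto.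
  - exists w. split; auto. split; auto. intros y Hy Py. apply Hmin; auto. apply in_boxl; auto.
Qed.

Definition negv (w : vec) : vec := ((- fst w)%Z, (- snd w)%Z).

Lemma xi_neg a w : Rabs (xi a (negv w)) = Rabs (xi a w).
Proof.
  unfold xi, negv; simpl. rewrite !opp_IZR.
  replace (- IZR (fst w) * a + - IZR (snd w)) with (- (IZR (fst w) * a + IZR (snd w))) by ring.
  apply Rabs_Ropp.
Qed.

Lemma inbox_neg m w : inbox m w -> inbox m (negv w).
Proof. unfold inbox, negv; simpl. lia. Qed.

Lemma norm_or_neg (w : vec) : w <> (0%Z, 0%Z) -> normalized w \/ normalized (negv w).
Proof.
  destruct w as [x y]. unfold normalized, negv; simpl. intros H.
  destruct (Z.eq_dec x 0); destruct (Z.eq_dec y 0); subst; try (exfalso; apply H; reflexivity); lia.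
Qed.

Lemma IsA_ex a m : (1 <= m)%nat -> exists A, IsA a m A.
Proof.
  intros Hm.
  destruct (box_min m (fun w => w <> (0%Z, 0%Z)) (fun w => Rabs (xi a w)) (1%Z, 0%Z))
    as [u [Hu1 [Hu2 Hu3]]].
  { unfold inbox; simpl; lia. } { intro E; inversion E. }
  assert (Hw1 : exists w1, normalized w1 /\ inbox m w1 /\
     forall w : vec, w <> (0%Z, 0%Z) -> inbox m w -> Rabs (xi a w1) <= Rabs (xi a w)).
  { destruct (norm_or_neg u Hu2) as [N|N]; [exists u|exists (negv u)].
    - split; [exact N|split; [exact Hu1|]]. intros w Hw Hbw. apply Hu3; auto.
    - split; [exact N|]. split; [apply inbox_neg; auto|]. intros w Hw Hbw.
      rewrite xi_neg. apply Hu3; auto. }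
  destruct Hw1 as [w1 [N1 [B1 M1]]].
  assert (Hex : exists w0, inbox m w0 /\ det2 w1 w0 <> 0%Z).
  { destruct (Z.eq_dec (fst w1) 0) as [E|E].
    - exists (1%Z, 0%Z). split; [unfold inbox; simpl; lia|].
      unfold det2; simpl. unfold normalized in N1. lia.
    - exists (0%Z, 1%Z). split; [unfold inbox; simpl; lia|].
      unfold det2; simpl. lia. }
  destruct Hex as [w0 [Hb0 Hd0]].
  destruct (box_min m (fun w => det2 w1 w <> 0%Z) (fun w => Rabs (xi a w)) w0 Hb0 Hd0)
    as [v [Hv1 [Hv2 Hv3]]].
  assert (Hv0 : v <> (0%Z, 0%Z)) by (intro E; subst v; apply Hv2; unfold det2; simpl; ring).
  destruct (norm_or_neg v Hv0) as [N|N]; [exists (w1, v)|exists (w1, negv v)];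
    unfold IsA; simpl.
  - split; [split; [auto|split; auto]|]. split; [auto|]. split; [auto|]. split; [auto|].
    intros w Hw Hbw. apply Hv3; auto.
  - split; [split; [auto|split; auto]|]. split; [auto|]. split; [apply inbox_neg; auto|]. split.
    + unfold det2, negv in *; simpl. lia.
    + intros w Hw Hbw. rewrite xi_neg. apply Hv3; auto.
Qed.

Lemma Amat_spec a m : (1 <= m)%nat -> IsA a m (Amat a m).
Proof. intros Hm. unfold Amat. apply epsilon_spec. apply IsA_ex; auto. Qed.

Lemma chain_ge1 a k m : ChainIdx a k m -> (1 <= m)%nat /\ (1 <= k)%nat.
Proof. induction 1; lia. Qed.

Lemma not_app1 a : ~ Appeared a 1.
Proof. intros [i [Hi _]]. lia. Qed.

Lemma first_app a n : forall m, (m <= n)%nat -> (1 <= m)%nat ->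
  exists m', (1 <= m' <= m)%nat /\ ~ Appeared a m' /\ Amat a m' = Amat a m.
Proof.
  induction n as [|n IH]; intros m Hmn Hm; [lia|].
  destruct (classic (Appeared a m)) as [[i [Hi E]]|NA].
  - destruct (IH i ltac:(lia) ltac:(lia)) as [m' [H1 [H2 H3]]].
    exists m'. split; [lia|]. split; auto. congruence.
  - exists m. split; [lia|]. auto.
Qed.

Lemma last_na a d : (1 <= d)%nat -> exists m0, (1 <= m0 <= d)%nat /\ ~ Appeared a m0 /\
  forall j, (m0 < j <= d)%nat -> Appeared a j.
Proof.
  induction d as [|d IH]; intros Hd; [lia|].
  destruct (classic (Appeared a (S d))) as [A|NA].
  - destruct d as [|d]; [exfalso; apply (not_app1 a); auto|].
    destruct (IH ltac:(lia)) as [m0 [H1 [H2 H3]]].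
    exists m0. split; [lia|]. split; auto. intros j Hj.
    destruct (Nat.eq_dec j (S (S d))); [subst; auto|]. apply H3; lia.
  - exists (S d). split; [lia|]. split; auto. intros; lia.
Qed.

Lemma na_chain a n : forall m, (m <= n)%nat -> (1 <= m)%nat -> ~ Appeared a m ->
  exists k, ChainIdx a k m.
Proof.
  induction n as [|n IH]; intros m Hmn Hm NA; [lia|].
  destruct (Nat.eq_dec m 1) as [E|E]; [subst; exists 1%nat; constructor|].
  destruct (last_na a (m - 1) ltac:(lia)) as [m0 [H1 [H2 H3]]].
  destruct (IH m0 ltac:(lia) ltac:(lia) H2) as [k Hk].
  exists (S k). apply (ChainIdxS a k m0 m Hk); [lia|auto|].
  intros j Hj. apply H3. lia.
Qed.

Lemma chain_cover a m : (1 <= m)%nat -> exists k m', (1 <= k)%nat /\ ChainIdx a k m' /\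
  Amat a m' = Amat a m.
Proof.
  intros Hm. destruct (first_app a m m (le_n _) Hm) as [m' [H1 [H2 H3]]].
  destruct (na_chain a m' m' (le_n _) ltac:(lia) H2) as [k Hk].
  exists k, m'. split; [apply (chain_ge1 _ _ _ Hk)|]. auto.
Qed.

Lemma Rabs_IZR_ge1 z : z <> 0%Z -> 1 <= Rabs (IZR z).
Proof.
  intros Hz. rewrite <- abs_IZR. apply IZR_le. lia.
Qed.

Lemma Rabs_IZR_le z (m : nat) : (Z.abs z <= Z.of_nat m)%Z -> Rabs (IZR z) <= INR m.
Proof. intros H. rewrite <- abs_IZR, INR_IZR_INZ. apply IZR_le. auto. Qed.

Lemma dirB a (H0 : 0 < a) (H1 : a < 1) (Hirr : irrational a) (M : Z)
  (HM : forall j, (1 <= j)%nat -> (cf_pq a j <= M)%Z) m (Hm : (1 <= m)%nat) :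
  / (IZR M + 1) <= Rabs (alpha_1 a (Amat a m)).
Proof.
  pose proof (Amat_spec a m Hm) as HA.
  destruct (Amat a m) as [w1 w2]. unfold IsA in HA; simpl in HA.
  destruct HA as [[N1 [B1 M1]] [N2 [B2 [Dt M2]]]].
  destruct (Q_range a H0 H1 Hirr (Z.of_nat m) ltac:(lia)) as [k [Hk [HQk HQk1]]].
  destruct k as [|j]; [lia|].
  assert (Hlow : T a (S j) <= Rabs (xi a w1)).
  { destruct w1 as [r1 r2]. unfold xi; cbn [fst snd]. destruct (Z.eq_dec r1 0) as [E|E].
    - subst r1. unfold normalized in N1; simpl in N1.
      replace (IZR 0 * a + IZR r2) with (IZR r2) by (simpl; ring).
      pose proof (Rabs_IZR_ge1 r2 ltac:(lia)). pose proof (T_le1 a H0 H1 Hirr (S j)). lra.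
    - apply best_approx; auto. destruct B1 as [B1 _]; simpl in B1. lia. }
  pose proof (eps_pm a j) as Heps.
  destruct (Q_facts a H0 H1 Hirr j) as [Qj0 [QSj [Qmono _]]].
  assert (Hup : Rabs (xi a w2) <= T a j).
  { destruct (Z.eq_dec (det2 w1 (Q a (S j), (- P a (S j))%Z)) 0) as [E|E].
    - assert (Hd : det2 w1 (Q a j, (- P a j))%Z <> 0%Z).
      { destruct w1 as [r1 r2]. unfold det2 in *; cbn [fst snd] in *. unfold eps in Heps.
        unfold normalized in N1; cbn [fst snd] in N1.
        assert (r1 <> 0%Z) by (intro; subst; nia).
        intro E2.
        assert (HH : (Q a (S j) * (r1 * - P a j - r2 * Q a j) -
                     r1 * (P a (S j) * Q a j - Q a (S j) * P a j) =
                     Q a j * (r1 * - P a (S j) - r2 * Q a (S j)))%Z) by ring.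
        rewrite E2, E in HH.
        assert (HH2 : (r1 * (P a j * Q a (S j) - P a (S j) * Q a j) = 0)%Z) by lia.
        destruct Heps as [He|He]; rewrite He in HH2; lia. }
      pose proof (M2 _ Hd (inbox_e a H0 H1 Hirr j m Hm ltac:(lia))) as HH.
      rewrite xi_e, Dabs in HH by auto. exact HH.
    - pose proof (M2 _ E (inbox_e a H0 H1 Hirr (S j) m Hm ltac:(lia))) as HH.
      rewrite xi_e, Dabs in HH by auto. pose proof (T_dec a H0 H1 Hirr j). lra. }
  assert (HT : T a j <= (IZR M + 1) * T a (S j)).
  { rewrite (T_rec a H0 H1 Hirr j). pose proof (T_dec a H0 H1 Hirr (S j)).
    pose proof (T_pos a H0 H1 Hirr (S j)).
    assert (IZR (cf_pq a (S j)) <= IZR M) by (apply IZR_le; apply HM; lia). nra. }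
  assert (HM1 : 1 <= IZR M) by (apply IZR_le; pose proof (a_ge1 a H0 H1 Hirr 0); pose proof (HM 1%nat ltac:(lia)); lia).
  pose proof (T_pos a H0 H1 Hirr (S j)).
  unfold alpha_1; simpl. unfold Rdiv. rewrite Rabs_mult, Rabs_inv.
  set (A := Rabs (xi a w1)) in *. set (B := Rabs (xi a w2)) in *.
  assert (Hw2 : w2 <> (0%Z, 0%Z)) by (intro E; subst w2; apply Dt; unfold det2; simpl; ring).
  assert (HB : 0 < B) by (pose proof (M1 w2 Hw2 B2); unfold A, B in *; lra).
  assert (HAB : B <= (IZR M + 1) * A) by nra.
  apply (Rmult_le_reg_r (B * (IZR M + 1))); [nra|].
  replace (/ (IZR M + 1) * (B * (IZR M + 1))) with B by (field; lra).
  replace (A * / B * (B * (IZR M + 1))) with ((IZR M + 1) * A) by (field; lra).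
  exact HAB.
Qed.

Lemma det_xi a (u v : vec) : IZR (det2 u v) = IZR (fst u) * xi a v - IZR (fst v) * xi a u.
Proof. unfold det2, xi. rewrite minus_IZR, !mult_IZR. ring. Qed.

Lemma dirA a (H0 : 0 < a) (H1 : a < 1) (Hirr : irrational a) (d : R) (Hd : 0 < d)
  (H : forall m, (1 <= m)%nat -> d <= Rabs (alpha_1 a (Amat a m))) j (Hj : (1 <= j)%nat) :
  IZR (cf_pq a j) <= 2 / d.
Proof.
  destruct j as [|i]; [lia|].
  destruct (Q_facts a H0 H1 Hirr i) as [Qi0 [QSi _]].
  set (q := Q a (S i)) in *.
  set (m := Z.to_nat q).
  assert (Hmq : Z.of_nat m = q) by (unfold m; lia).
  assert (Hm : (1 <= m)%nat) by lia.
  assert (HINR : INR m = IZR q) by (rewrite INR_IZR_INZ, Hmq; auto).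
  pose proof (H m Hm) as Hrat.
  pose proof (Amat_spec a m Hm) as HA.
  destruct (Amat a m) as [w1 w2]. unfold IsA in HA; simpl in HA.
  destruct HA as [[N1 [B1 M1]] [N2 [B2 [Dt M2]]]].
  assert (Hw1 : Rabs (xi a w1) <= T a (S i)).
  { rewrite <- (Dabs a H0 H1 Hirr (S i)), <- xi_e. apply M1.
    - intro E; apply (f_equal fst) in E; cbn [fst] in E; fold q in E; lia.
    - apply inbox_e; auto. lia. }
  assert (Hw2 : w2 <> (0%Z, 0%Z)) by (intro E; subst w2; apply Dt; unfold det2; simpl; ring).
  assert (Hle : Rabs (xi a w1) <= Rabs (xi a w2)) by (apply M1; auto).
  assert (Hdet : 1 <= 2 * IZR q * Rabs (xi a w2)).
  { pose proof (Rabs_IZR_ge1 _ Dt) as D1. rewrite (det_xi a) in D1.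
    pose proof (Rabs_triang (IZR (fst w1) * xi a w2) (- (IZR (fst w2) * xi a w1))) as TR.
    rewrite Rabs_Ropp, !Rabs_mult in TR.
    pose proof (Rabs_IZR_le (fst w1) m (proj1 B1)).
    pose proof (Rabs_IZR_le (fst w2) m (proj1 B2)).
    pose proof (Rabs_pos (xi a w1)). pose proof (Rabs_pos (xi a w2)).
    unfold Rminus in D1. rewrite HINR in *.
    assert (Rabs (IZR (fst w1)) * Rabs (xi a w2) <= IZR q * Rabs (xi a w2))
      by (apply Rmult_le_compat_r; lra).
    assert (Rabs (IZR (fst w2)) * Rabs (xi a w1) <= IZR q * Rabs (xi a w2)).
    { apply Rle_trans with (IZR q * Rabs (xi a w1)); [apply Rmult_le_compat_r; lra|].
      apply Rmult_le_compat_l; [apply IZR_le; lia|lra]. }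
    lra. }
  assert (HqR : 1 <= IZR q) by (apply IZR_le; lia).
  assert (Hpos2 : 0 < Rabs (xi a w2)) by nra.
  assert (Hdw : d * Rabs (xi a w2) <= Rabs (xi a w1)).
  { unfold alpha_1 in Hrat; simpl in Hrat. unfold Rdiv in Hrat.
    rewrite Rabs_mult, Rabs_inv in Hrat.
    apply (Rmult_le_compat_r (Rabs (xi a w2))) in Hrat; [|lra].
    rewrite Rmult_assoc, Rinv_l in Hrat by lra. lra. }
  pose proof (det_id a H0 H1 Hirr (S i)) as DI.
  rewrite Q_SS in DI. rewrite plus_IZR, mult_IZR in DI. fold q in DI.
  pose proof (T_pos a H0 H1 Hirr (S i)). pose proof (T_pos a H0 H1 Hirr (S (S i))).
  assert (HQi : 0 <= IZR (Q a i)) by (apply IZR_le; lia).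
  pose proof (a_ge1 a H0 H1 Hirr i) as Ha. apply IZR_le in Ha.
  set (A := IZR (cf_pq a (S i))) in *.
  set (t := T a (S i)) in *.
  assert (Hdt : d <= 2 * IZR q * t) by nra.
  assert (HAqt : A * IZR q * t <= 1) by nra.
  assert (d * A <= 2) by nra.
  apply (Rmult_le_reg_l d); [lra|]. replace (d * (2 / d)) with 2 by (field; lra). lra.
Qed.

Theorem lemma4p2 (alpha : R) (H0 : 0 < alpha) (H1 : alpha < 1)
  (Hirr : irrational alpha) :
  (exists M : Z, forall j : nat, (1 <= j)%nat -> (cf_pq alpha j <= M)%Z) <->
  (exists delta : R, 0 < delta /\
     forall k m : nat, (1 <= k)%nat -> ChainIdx alpha k m ->
       delta <= Rabs (alpha_1 alpha (Amat alpha m))).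
Proof.
  split.
  - intros [M HM]. exists (/ (IZR M + 1)). split.
    + assert (1 <= IZR M) by (apply IZR_le; pose proof (a_ge1 alpha H0 H1 Hirr 0);
        pose proof (HM 1%nat ltac:(lia)); lia).
      apply Rinv_0_lt_compat. lra.
    + intros k m Hk Hc. apply dirB; auto. apply (chain_ge1 _ _ _ Hc).
  - intros [d [Hd H]]. exists (up (2 / d)). intros j Hj.
    assert (Hm : forall m, (1 <= m)%nat -> d <= Rabs (alpha_1 alpha (Amat alpha m))).
    { intros m Hm. destruct (chain_cover alpha m Hm) as [k [m' [Hk [Hc E]]]].
      rewrite <- E. apply (H k m' Hk Hc). }
    pose proof (dirA alpha H0 H1 Hirr d Hd Hm j Hj).
    destruct (archimed (2 / d)) as [A _].
    assert (IZR (cf_pq alpha j) < IZR (up (2 / d))) by lra.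
    apply lt_IZR in H3. lia.
Qed.
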